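(* Let $f:[0,1]\times\mathbb{R}\rightarrow\mathbb{R}$ be continuous and assume there exists $\varphi\in\Phi$ such that: (K1) $0\leq f(t,b)-f(t,a)\leq9\sqrt{3}\,\varphi(b-a)$ for all $t\in[0,1]$ and all $a,b\in\mathbb{R}$ with $a\leq b$; (K2) there exists $x_{0}\in C([0,1])$ such that $x_{0}(t)\leq\int_{0}^{1}G(t,s)f(s,x_{0}(s))\,\mathrm{d}s$ for all $t\in[0,1]$. Then the boundary value problem \[ x'''(t)+f(t,x(t))=0,\ t\in(0,1),\qquad x(0)=x(1)=x''(0)=0 \] has a unique solution.
   Context: $C([0,1])$ denotes real continuous functions on $[0,1]$. $G(t,s)=\frac12(1-t)(t-s^2)$ for $0\leq s\leq t\leq1$ and $G(t,s)=\frac12 t(1-s)^2$ for $0\leq t\leq s\leq1$. $\Phi$ is the set of all nondecreasing functions $\varphi:[0,+\infty)\rightarrow[0,+\infty)$ such that for every $\varepsilon>0$ there exists $\delta(\varepsilon)>0$ with $\varepsilon\leq t<\varepsilon+\delta(\varepsilon)\Rightarrow\varphi(t)<\varepsilon$. *)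

(* Defs.v *)
From Stdlib Require Import Reals.
From Coquelicot Require Import Coquelicot.
Open Scope R_scope.

Definition G (t s : R) : R :=
  if Rle_dec s t then / 2 * (1 - t) * (t - s ^ 2)
  else / 2 * t * (1 - s) ^ 2.

Definition in_Phi (phi : R -> R) : Prop :=
  (forall t, 0 <= t -> 0 <= phi t) /\
  (forall s t, 0 <= s -> s <= t -> phi s <= phi t) /\
  (forall eps, 0 < eps -> exists delta, 0 < delta /\
     forall t, eps <= t -> t < eps + delta -> phi t < eps).

Definition cont01 (g : R -> R) : Prop :=
  forall t, 0 <= t <= 1 -> forall eps, 0 < eps -> exists delta, 0 < delta /\
    forall t', 0 <= t' <= 1 -> Rabs (t' - t) < delta -> Rabs (g t' - g t) < eps.

Definition cont01xR (f : R -> R -> R) : Prop :=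
  forall t y, 0 <= t <= 1 -> forall eps, 0 < eps -> exists delta, 0 < delta /\
    forall t' y', 0 <= t' <= 1 -> Rabs (t' - t) < delta -> Rabs (y' - y) < delta ->
      Rabs (f t' y' - f t y) < eps.

(* x is a (classical, C^3[0,1]) solution of
     x'''(t) + f(t,x(t)) = 0 on (0,1),  x(0) = x(1) = x''(0) = 0.
   x1, x2, x3 are the first three derivatives of x on (0,1), each extended
   continuously to [0,1]; x''(0) is understood as x2 0. *)
Definition is_solution (f : R -> R -> R) (x : R -> R) : Prop :=
  exists x1 x2 x3 : R -> R,
    cont01 x /\ cont01 x1 /\ cont01 x2 /\ cont01 x3 /\
    (forall t, 0 < t < 1 -> is_derive x t (x1 t)) /\
    (forall t, 0 < t < 1 -> is_derive x1 t (x2 t)) /\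
    (forall t, 0 < t < 1 -> is_derive x2 t (x3 t)) /\
    (forall t, 0 < t < 1 -> x3 t + f t (x t) = 0) /\
    x 0 = 0 /\ x 1 = 0 /\ x2 0 = 0.

(* Main.v *)
Require Import Defs.
From Stdlib Require Import Reals Lra.
From Coquelicot Require Import Coquelicot.
Open Scope R_scope.

Ltac rr := match goal with |- ?a = ?b => change (@eq R a b) end; ring.

Definition clamp t := Rmax 0 (Rmin 1 t).
Lemma clamp_in t : 0 <= clamp t <= 1.
Proof. unfold clamp, Rmax, Rmin; repeat destruct Rle_dec; lra. Qed.
Lemma clamp_id t : 0 <= t <= 1 -> clamp t = t.
Proof. unfold clamp, Rmax, Rmin; repeat destruct Rle_dec; lra. Qed.
Lemma clamp_lip a b : Rabs (clamp a - clamp b) <= Rabs (a - b).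
Proof. unfold clamp, Rmax, Rmin; repeat destruct Rle_dec; unfold Rabs; repeat destruct Rcase_abs; lra. Qed.

Lemma ball_R (x y e : R) : ball x e y <-> Rabs (y - x) < e.
Proof. reflexivity. Qed.

Lemma cont01_clamp g : cont01 g -> forall t, continuous (fun s => g (clamp s)) t.
Proof.
  intros Hg t. apply continuity_pt_filterlim, continuity_pt_locally. intro eps.
  destruct (Hg (clamp t) (clamp_in t) eps (cond_pos eps)) as [d [Hd H]].
  exists (mkposreal d Hd). intros y Hy. apply ball_R in Hy. change (Rabs (y - t) < d) in Hy.
  apply H. apply clamp_in. pose proof (clamp_lip y t). lra.
Qed.

Lemma cont_cont01 h : (forall t, 0 <= t <= 1 -> continuous h t) -> cont01 h.
Proof.
  intros Hh t Ht eps He. specialize (Hh t Ht).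
  apply continuity_pt_filterlim in Hh. rewrite continuity_pt_locally in Hh.
  destruct (Hh (mkposreal eps He)) as [d Hd]. exists d. split. apply cond_pos.
  intros t' _ Ht'. apply (Hd t'). apply ball_R. exact Ht'.
Qed.

Lemma cont01_ext g h : cont01 g -> (forall t, 0 <= t <= 1 -> g t = h t) -> cont01 h.
Proof.
  intros Hg E t Ht eps He. destruct (Hg t Ht eps He) as [d [Hd H]].
  exists d; split; auto. intros t' Ht' H'. rewrite <- !E; auto.
Qed.

Lemma cont01_comp f x : cont01xR f -> cont01 x -> cont01 (fun s => f s (x s)).
Proof.
  intros Hf Hx t Ht eps He.
  destruct (Hf t (x t) Ht eps He) as [d1 [Hd1 H1]].
  destruct (Hx t Ht d1 Hd1) as [d2 [Hd2 H2]].
  exists (Rmin d1 d2). split. apply Rmin_glb_lt; auto.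
  intros t' Ht' H'. apply H1; auto.
  - pose proof (Rmin_l d1 d2). lra.
  - apply H2; auto. pose proof (Rmin_r d1 d2). lra.
Qed.

Lemma bounded01 g : cont01 g -> exists M, forall t, 0 <= t <= 1 -> Rabs (g t) <= M.
Proof.
  intros Hg.
  assert (C1 : forall c, 0 <= c <= 1 -> continuity_pt (fun s => g (clamp s)) c).
  { intros c _. apply continuity_pt_filterlim. apply cont01_clamp; auto. }
  assert (C2 : forall c, 0 <= c <= 1 -> continuity_pt (fun s => - g (clamp s)) c).
  { intros c Hc. apply continuity_pt_opp. apply C1. lra. }
  destruct (continuity_ab_maj _ 0 1 Rle_0_1 C1) as [a [Ha _]].
  destruct (continuity_ab_maj _ 0 1 Rle_0_1 C2) as [b [Hb _]].
  exists (Rmax (g (clamp a)) (- g (clamp b))). intros t Ht.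
  specialize (Ha t Ht). specialize (Hb t Ht). cbv beta in Ha, Hb. rewrite (clamp_id t Ht) in Ha, Hb.
  unfold Rmax; destruct Rle_dec; unfold Rabs; destruct Rcase_abs; lra.
Qed.

Lemma ex_RInt_cont (f : R -> R) a b : (forall s, continuous f s) -> ex_RInt f a b.
Proof. intros H. apply (ex_RInt_continuous (V:=R_CompleteNormedModule)). intros; apply H. Qed.

Lemma RInt_correctR (f : R -> R) a b : ex_RInt f a b -> is_RInt f a b (RInt f a b).
Proof. apply (RInt_correct (V:=R_CompleteNormedModule)). Qed.

Lemma RInt_scalR (f : R -> R) a b c : ex_RInt f a b -> RInt (fun x => c * f x) a b = c * RInt f a b.
Proof. intros H. exact (RInt_scal f a b c H). Qed.
Lemma RInt_minusR (f g : R -> R) a b : ex_RInt f a b -> ex_RInt g a b ->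
  RInt (fun x => f x - g x) a b = RInt f a b - RInt g a b.
Proof. intros H1 H2. exact (RInt_minus f g a b H1 H2). Qed.

Lemma cont_polmul (p g : R -> R) : (forall s, ex_derive p s) -> (forall s, continuous g s) ->
  forall s, continuous (fun s => p s * g s) s.
Proof. intros Hp Hg s. apply (continuous_mult p g). apply (ex_derive_continuous (K:=R_AbsRing) (V:=R_NormedModule)); auto. auto. Qed.

Ltac fixD H := match type of H with is_derive ?F ?t ?v =>
  replace (Derive (fun x : R => F x) t) with v by (symmetry; apply is_derive_unique; exact H) end.

Section K.
Variable g : R -> R.
Hypothesis Hg : forall s, continuous g s.

Definition IA t := RInt g 0 t.
Definition IB t := RInt (fun s => s^2 * g s) 0 t.
Definition IC t := RInt (fun s => (1-s)^2 * g s) t 1.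
Definition Fm t := /2*(1-t)*(t*IA t - IB t) + /2*t*IC t.
Definition F1 t := /2*((1-2*t)*IA t + IB t + IC t).
Definition F2 t := - IA t.

Lemma cB : forall s, continuous (fun s => s^2 * g s) s.
Proof. apply cont_polmul; auto. intros; auto_derive; auto. Qed.
Lemma cC : forall s, continuous (fun s => (1-s)^2 * g s) s.
Proof. apply cont_polmul; auto. intros; auto_derive; auto. Qed.

Lemma dA t : is_derive IA t (g t).
Proof. apply is_derive_RInt with 0. exists (mkposreal 1 Rlt_0_1). intros. apply RInt_correctR, ex_RInt_cont; auto. auto. Qed.
Lemma dB t : is_derive IB t (t^2 * g t).
Proof. apply (is_derive_RInt (fun s => s^2 * g s)) with 0. exists (mkposreal 1 Rlt_0_1). intros. apply RInt_correctR, ex_RInt_cont, cB. apply cB. Qed.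
Lemma dC t : is_derive IC t (- ((1-t)^2 * g t)).
Proof. apply (is_derive_RInt' (fun s => (1-s)^2 * g s)) with 1. exists (mkposreal 1 Rlt_0_1). intros. apply RInt_correctR, ex_RInt_cont, cC. apply cC. Qed.

Lemma dFm t : is_derive Fm t (F1 t).
Proof.
  pose proof (dA t) as Ha. pose proof (dB t) as Hb. pose proof (dC t) as Hc.
  unfold Fm. auto_derive.
  - repeat split; eexists; eassumption.
  - fixD Ha. fixD Hb. fixD Hc. unfold F1. ring.
Qed.
Lemma dF1 t : is_derive F1 t (F2 t).
Proof.
  pose proof (dA t) as Ha. pose proof (dB t) as Hb. pose proof (dC t) as Hc.
  unfold F1. auto_derive.
  - repeat split; eexists; eassumption.
  - fixD Ha. fixD Hb. fixD Hc. unfold F2. field.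
Qed.
Lemma dF2 t : is_derive F2 t (- g t).
Proof.
  pose proof (dA t) as Ha. unfold F2. auto_derive.
  - repeat split; eexists; eassumption.
  - fixD Ha. ring.
Qed.

Lemma exG t : 0 <= t <= 1 -> ex_RInt (fun s => G t s * g s) 0 1.
Proof.
  intros Ht.
  set (P1 := fun s => /2*(1-t)*(t - s^2) * g s).
  set (P2 := fun s => /2*t*(1-s)^2 * g s).
  apply (ex_RInt_Chasles _ 0 t 1).
  - apply (ex_RInt_ext P1).
    + intros s Hs. rewrite Rmin_left, Rmax_right in Hs by lra. unfold G, P1.
      destruct (Rle_dec s t); [rr| lra].
    + apply ex_RInt_cont. apply (cont_polmul (fun s => /2*(1-t)*(t - s^2))); auto. intros; auto_derive; auto.
  - apply (ex_RInt_ext P2).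
    + intros s Hs. rewrite Rmin_left, Rmax_right in Hs by lra. unfold G, P2.
      destruct (Rle_dec s t); [lra| rr].
    + apply ex_RInt_cont. apply (cont_polmul (fun s => /2*t*(1-s)^2)); auto. intros; auto_derive; auto.
Qed.

Lemma key t : 0 <= t <= 1 -> RInt (fun s => G t s * g s) 0 1 = Fm t.
Proof.
  intros Ht.
  set (P1 := fun s => /2*(1-t)*(t*g s - s^2 * g s)).
  set (P2 := fun s => /2*t*((1-s)^2 * g s)).
  assert (E1 : forall s, Rmin 0 t < s < Rmax 0 t -> P1 s = G t s * g s).
  { intros s Hs. rewrite Rmin_left, Rmax_right in Hs by lra. unfold G, P1.
    destruct Rle_dec; [rr| lra]. }
  assert (E2 : forall s, Rmin t 1 < s < Rmax t 1 -> P2 s = G t s * g s).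
  { intros s Hs. rewrite Rmin_left, Rmax_right in Hs by lra. unfold G, P2.
    destruct Rle_dec; [lra| rr]. }
  assert (X1 : ex_RInt P1 0 t).
  { apply ex_RInt_cont. intro s. unfold P1. apply (continuous_mult (fun _ => /2*(1-t))).
    apply continuous_const. apply (continuous_minus (fun s => t * g s)).
    apply (continuous_mult (fun _ => t)). apply continuous_const. auto. apply cB. }
  assert (X2 : ex_RInt P2 t 1).
  { apply ex_RInt_cont. intro s. unfold P2. apply (continuous_mult (fun _ => /2*t)).
    apply continuous_const. apply cC. }
  rewrite <- (RInt_Chasles _ 0 t 1).
  2: { apply (ex_RInt_ext P1); auto. }
  2: { apply (ex_RInt_ext P2); auto. }
  rewrite <- (RInt_ext P1 _ 0 t E1), <- (RInt_ext P2 _ t 1 E2).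
  unfold P1, P2. rewrite !RInt_scalR.
  2: { apply ex_RInt_cont, cC. }
  2: { apply ex_RInt_cont. intro s. apply (continuous_minus (fun s => t * g s)).
    apply (continuous_mult (fun _ => t)). apply continuous_const. auto. apply cB. }
  rewrite RInt_minusR. 2: { apply ex_RInt_cont. intro s. apply (continuous_mult (fun _ => t)). apply continuous_const. auto. }
  2: apply ex_RInt_cont, cB.
  rewrite RInt_scalR by (apply ex_RInt_cont; auto).
  unfold Fm, IA, IB, IC. reflexivity.
Qed.
End K.

Lemma IB1 t : RInt (fun s => s^2 * 1) 0 t = t^3/3.
Proof.
  apply is_RInt_unique.
  assert (H := is_RInt_derive (V:=R_CompleteNormedModule) (fun s => s^3/3) (fun s => s^2*1) 0 t).
  replace (t^3/3) with (minus (t^3/3) (0^3/3)). apply H.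
  - intros; auto_derive; auto; simpl; field.
  - intros. apply (cont_polmul (fun s => s^2) (fun _ => 1)). intros; auto_derive; auto. intros; apply continuous_const.
  - unfold minus, plus, opp; simpl; field.
Qed.
Lemma IC1 t : RInt (fun s => (1-s)^2 * 1) t 1 = (1-t)^3/3.
Proof.
  apply is_RInt_unique.
  assert (H := is_RInt_derive (V:=R_CompleteNormedModule) (fun s => -(1-s)^3/3) (fun s => (1-s)^2*1) t 1).
  replace ((1-t)^3/3) with (minus (-(1-1)^3/3) (-(1-t)^3/3)). apply H.
  - intros; auto_derive; auto; simpl; field.
  - intros. apply (cont_polmul (fun s => (1-s)^2) (fun _ => 1)). intros; auto_derive; auto. intros; apply continuous_const.
  - unfold minus, plus, opp; simpl; field.
Qed.

Lemma intG t : 0 <= t <= 1 -> RInt (fun s => G t s) 0 1 = (t - t^3)/6.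
Proof.
  intros Ht.
  rewrite (RInt_ext _ (fun s => G t s * 1)) by (intros; rr).
  rewrite (key (fun _ => 1)) by (auto || (intros; apply continuous_const)).
  unfold Fm, IA, IB, IC. rewrite IB1, IC1, RInt_const.
  unfold scal; simpl; unfold mult; simpl. field.
Qed.

Lemma Gbound t : 0 <= t <= 1 -> 9 * sqrt 3 * ((t - t^3)/6) <= 1.
Proof.
  intros Ht. pose proof (sqrt_lt_R0 3 ltac:(lra)) as Hs. pose proof (sqrt_sqrt 3 ltac:(lra)) as Hs2.
  set (s := sqrt 3) in *. set (u := s * t).
  assert (Hu : 0 <= u) by (unfold u; nra).
  assert (E : 9 * s * ((t - t^3)/6) = (3*u - u^3) / 2).
  { assert (E3 : u^3 = 3*s*t^3).
    { unfold u. replace ((s*t)^3) with ((s*s)*s*t^3) by ring. rewrite Hs2. ring. }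
    rewrite E3. unfold u. field. }
  rewrite E. assert (H0 : 0 <= (u-1)^2*(u+2)) by (apply Rmult_le_pos; [apply pow2_ge_0| lra]).
  assert (H1 : (u-1)^2*(u+2) = u^3 - 3*u + 2) by ring. rewrite H1 in H0. lra.
Qed.

Lemma G_nonneg t s : 0 <= t <= 1 -> 0 <= s <= 1 -> 0 <= G t s.
Proof. intros Ht Hs. unfold G. destruct (Rle_dec s t).
  - assert (s^2 <= s) by (simpl; nra). apply Rmult_le_pos; [apply Rmult_le_pos|]; lra.
  - apply Rmult_le_pos; [apply Rmult_le_pos; lra| apply pow2_ge_0]. Qed.

Section Op.
Variable f : R -> R -> R.
Variable phi : R -> R.
Hypothesis Hf : cont01xR f.
Hypothesis Hphi : in_Phi phi.
Hypothesis HK : forall t a b, 0 <= t <= 1 -> a <= b ->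
        0 <= f t b - f t a /\ f t b - f t a <= 9 * sqrt 3 * phi (b - a).

Definition T (x : R -> R) := fun t => RInt (fun s => G t s * f s (x s)) 0 1.
Definition gcl (x : R -> R) := fun s => f (clamp s) (x (clamp s)).

Lemma gcl_cont x : cont01 x -> forall s, continuous (gcl x) s.
Proof. intros Hx. apply (cont01_clamp (fun s => f s (x s))). apply cont01_comp; auto. Qed.

Lemma T_G x t : RInt (fun s => G t s * f s (x s)) 0 1 = RInt (fun s => G t s * gcl x s) 0 1.
Proof.
  apply RInt_ext. intros s Hs. rewrite Rmin_left, Rmax_right in Hs by lra.
  unfold gcl. rewrite clamp_id by lra. reflexivity.
Qed.

Lemma T_eq x : cont01 x -> forall t, 0 <= t <= 1 -> T x t = Fm (gcl x) t.
Proof. intros Hx t Ht. unfold T. rewrite T_G. apply key; auto. apply gcl_cont; auto. Qed.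

Lemma Fm_cont g : (forall s, continuous g s) -> forall t, continuous (Fm g) t.
Proof. intros Hg t. apply (ex_derive_continuous (K:=R_AbsRing) (V:=R_NormedModule)). eexists. apply dFm; auto. Qed.

Lemma T_cont x : cont01 x -> cont01 (T x).
Proof.
  intros Hx. apply (cont01_ext (Fm (gcl x))).
  - apply cont_cont01. intros. apply Fm_cont, gcl_cont; auto.
  - intros. symmetry. apply T_eq; auto.
Qed.

Lemma phi_mono s t : 0 <= s -> s <= t -> phi s <= phi t.
Proof. destruct Hphi as [_ [H _]]. auto. Qed.
Lemma phi_pos t : 0 <= t -> 0 <= phi t.
Proof. destruct Hphi as [H _]. auto. Qed.
Lemma phi_lt t : 0 < t -> phi t < t.
Proof. intros Ht. destruct Hphi as [_ [_ H]]. destruct (H t Ht) as [d [Hd H']]. apply H'; lra. Qed.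

Lemma f_lip s a b r : 0 <= s <= 1 -> Rabs (a - b) <= r -> Rabs (f s a - f s b) <= 9 * sqrt 3 * phi r.
Proof.
  intros Hs Hab. pose proof (sqrt_pos 3).
  destruct (Rle_dec a b) as [Hl|Hl].
  - destruct (HK s a b Hs Hl) as [H1 H2].
    assert (phi (b - a) <= phi r) by (apply phi_mono; [lra| rewrite Rabs_minus_sym in Hab; unfold Rabs in Hab; destruct Rcase_abs in Hab; lra]).
    assert (9 * sqrt 3 * phi (b - a) <= 9 * sqrt 3 * phi r) by (apply Rmult_le_compat_l; lra).
    rewrite Rabs_minus_sym. unfold Rabs; destruct Rcase_abs; lra.
  - destruct (HK s b a Hs ltac:(lra)) as [H1 H2].
    assert (phi (a - b) <= phi r) by (apply phi_mono; [lra| unfold Rabs in Hab; destruct Rcase_abs in Hab; lra]).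
    assert (9 * sqrt 3 * phi (a - b) <= 9 * sqrt 3 * phi r) by (apply Rmult_le_compat_l; lra).
    unfold Rabs; destruct Rcase_abs; lra.
Qed.

Lemma contr x y r : cont01 x -> cont01 y -> 0 <= r ->
  (forall s, 0 <= s <= 1 -> Rabs (x s - y s) <= r) ->
  forall t, 0 <= t <= 1 -> Rabs (T x t - T y t) <= phi r.
Proof.
  intros Hx Hy Hr Hxy t Ht. unfold T. rewrite !T_G.
  set (K := 9 * sqrt 3 * phi r).
  assert (HKp : 0 <= K) by (unfold K; pose proof (sqrt_pos 3); pose proof (phi_pos r Hr); 
     apply Rmult_le_pos; lra).
  assert (Ex : ex_RInt (fun s => G t s * gcl x s) 0 1) by (apply exG; auto; apply gcl_cont; auto).
  assert (Ey : ex_RInt (fun s => G t s * gcl y s) 0 1) by (apply exG; auto; apply gcl_cont; auto).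
  assert (EG : ex_RInt (fun s => G t s) 0 1).
  { apply (ex_RInt_ext (fun s => G t s * 1)). intros; rr. apply exG; auto. intros; apply continuous_const. }
  rewrite <- RInt_minusR by auto.
  assert (Hb : forall s, 0 < s < 1 -> Rabs (G t s * gcl x s - G t s * gcl y s) <= K * G t s).
  { intros s Hs. replace (G t s * gcl x s - G t s * gcl y s) with (G t s * (gcl x s - gcl y s)) by ring.
    rewrite Rabs_mult, (Rabs_pos_eq (G t s)) by (apply G_nonneg; lra).
    rewrite Rmult_comm. apply Rmult_le_compat_r. apply G_nonneg; lra.
    unfold gcl. rewrite clamp_id by lra. apply f_lip. lra. apply Hxy; lra. }
  assert (Ed : ex_RInt (fun s => G t s * gcl x s - G t s * gcl y s) 0 1).
  { apply (ex_RInt_minus (V:=R_NormedModule)); auto. }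
  assert (I1 : RInt (fun s => K * G t s) 0 1 <= phi r).
  { rewrite RInt_scalR by auto. rewrite intG by auto. pose proof (Gbound t Ht).
    pose proof (phi_pos r Hr). unfold K.
    replace (9 * sqrt 3 * phi r * ((t - t ^ 3) / 6)) with (phi r * (9 * sqrt 3 * ((t - t ^ 3) / 6))) by ring.
    rewrite <- (Rmult_1_r (phi r)) at 2. apply Rmult_le_compat_l; lra. }
  assert (U : RInt (fun s => G t s * gcl x s - G t s * gcl y s) 0 1 <= RInt (fun s => K * G t s) 0 1).
  { apply RInt_le; auto. lra. apply (ex_RInt_ext (fun s => scal K (G t s))). intros; reflexivity.
    apply (ex_RInt_scal (V:=R_NormedModule)); auto.
    intros s Hs. specialize (Hb s Hs). unfold Rabs in Hb; destruct Rcase_abs in Hb; lra. }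
  assert (L : RInt (fun s => (-K) * G t s) 0 1 <= RInt (fun s => G t s * gcl x s - G t s * gcl y s) 0 1).
  { apply RInt_le; auto. lra. apply (ex_RInt_ext (fun s => scal (-K) (G t s))). intros; reflexivity.
    apply (ex_RInt_scal (V:=R_NormedModule)); auto.
    intros s Hs. specialize (Hb s Hs). unfold Rabs in Hb; destruct Rcase_abs in Hb; lra. }
  rewrite RInt_scalR in L, U by auto. rewrite RInt_scalR in I1 by auto.
  unfold Rabs; destruct Rcase_abs; nra.
Qed.

Lemma loc01 (P : R -> Prop) t : 0 < t < 1 -> (forall y, 0 < y < 1 -> P y) -> locally t P.
Proof. intros Ht H. apply (locally_interval _ t 0 1); simpl; try lra. intros; apply H; simpl in *; lra. Qed.

Lemma const_deriv u k : cont01 u -> (forall t, 0 < t < 1 -> is_derive u t k) ->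
  forall t, 0 <= t <= 1 -> u t = u 0 + k * t.
Proof.
  intros Hu Hd t Ht. destruct (Req_dec t 0) as [->|Ht0]. ring.
  destruct (MVT_gen (fun s => u (clamp s)) 0 t (fun _ => k)) as [c [_ Hc]].
  - rewrite Rmin_left, Rmax_right by lra. intros z Hz.
    apply (is_derive_ext_loc u). apply loc01. lra. intros; rewrite clamp_id; auto; lra.
    apply Hd; lra.
  - intros. apply continuity_pt_filterlim. apply cont01_clamp; auto.
  - rewrite !clamp_id in Hc by lra. lra.
Qed.

Lemma cont01_minus a b : cont01 a -> (forall t, continuous b t) -> cont01 (fun t => a t - b t).
Proof.
  intros Ha Hb. apply (cont01_ext (fun t => a (clamp t) - b t)).
  - apply cont_cont01. intros t _. apply (continuous_minus (fun t => a (clamp t)) b).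
    apply cont01_clamp; auto. auto.
  - intros. rewrite clamp_id; auto.
Qed.

Lemma RInt_pt (h : R -> R) a : RInt h a a = 0.
Proof. exact (RInt_point a h). Qed.

Lemma Fm0 g : Fm g 0 = 0.
Proof. unfold Fm, IA, IB, IC. rewrite !RInt_pt. ring. Qed.
Lemma Fm1 g : Fm g 1 = 0.
Proof. unfold Fm, IA, IB, IC. rewrite !RInt_pt. ring. Qed.
Lemma F20 g : F2 g 0 = 0.
Proof. unfold F2, IA. rewrite !RInt_pt. ring. Qed.

Lemma fix_sol x : cont01 x -> (forall t, 0 <= t <= 1 -> x t = T x t) -> is_solution f x.
Proof.
  intros Hx Hfix. set (g := gcl x). assert (Hg : forall s, continuous g s) by (apply gcl_cont; auto).
  assert (E : forall t, 0 <= t <= 1 -> x t = Fm g t) by (intros; rewrite Hfix, T_eq; auto).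
  exists (F1 g), (F2 g), (fun t => - g t).
  split; [auto|]. split.
  { apply cont_cont01; intros. apply (ex_derive_continuous (K:=R_AbsRing) (V:=R_NormedModule)). eexists. apply dF1; auto. }
  split.
  { apply cont_cont01; intros. apply (ex_derive_continuous (K:=R_AbsRing) (V:=R_NormedModule)). eexists. apply dF2; auto. }
  split.
  { apply cont_cont01; intros. apply (continuous_opp g). auto. }
  split.
  { intros t Ht. apply (is_derive_ext_loc (Fm g)). apply loc01; auto. intros; rewrite E; auto; lra.
    apply dFm; auto. }
  split. { intros; apply dF1; auto. }
  split. { intros; apply dF2; auto. }
  split. { intros t Ht. unfold g, gcl. rewrite clamp_id by lra. ring. }
  split. { rewrite E by lra. apply Fm0. }
  split. { rewrite E by lra. apply Fm1. }
  apply F20.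
Qed.

Lemma sol_fix y : is_solution f y -> cont01 y /\ forall t, 0 <= t <= 1 -> y t = T y t.
Proof.
  intros [y1 [y2 [y3 [Cy [C1 [C2 [C3 [D1 [D2 [D3 [Eq [Y0 [Y1 Y20]]]]]]]]]]]]].
  split; auto. set (g := gcl y). assert (Hg : forall s, continuous g s) by (apply gcl_cont; auto).
  assert (cF : forall (F : R -> R) (dF : R -> R), (forall t, is_derive F t (dF t)) -> forall t, continuous F t).
  { intros F dF H t. apply (ex_derive_continuous (K:=R_AbsRing) (V:=R_NormedModule)). eexists. apply H. }
  assert (H2 : forall t, 0 <= t <= 1 -> y2 t - F2 g t = 0).
  { intros t Ht. rewrite (const_deriv (fun t => y2 t - F2 g t) 0).
    - rewrite Y20, F20. ring.
    - apply cont01_minus; auto. apply (cF _ _ (dF2 g Hg)).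
    - intros s Hs. assert (HH := is_derive_minus _ _ s _ _ (D3 s Hs) (dF2 g Hg s)).
      replace 0 with (minus (y3 s) (- g s)). exact HH.
      unfold minus, plus, opp; simpl. pose proof (Eq s Hs). unfold g, gcl. rewrite clamp_id by lra. lra.
    - auto. }
  set (c := y1 0 - F1 g 0).
  assert (H1 : forall t, 0 <= t <= 1 -> y1 t - F1 g t = c).
  { intros t Ht. rewrite (const_deriv (fun t => y1 t - F1 g t) 0).
    - unfold c. ring.
    - apply cont01_minus; auto. apply (cF _ _ (dF1 g Hg)).
    - intros s Hs. assert (HH := is_derive_minus _ _ s _ _ (D2 s Hs) (dF1 g Hg s)).
      replace 0 with (minus (y2 s) (F2 g s)). exact HH.
      unfold minus, plus, opp; simpl. pose proof (H2 s). lra.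
    - auto. }
  assert (H0 : forall t, 0 <= t <= 1 -> y t - Fm g t = c * t).
  { intros t Ht. rewrite (const_deriv (fun t => y t - Fm g t) c).
    - rewrite Y0, Fm0. ring.
    - apply cont01_minus; auto. apply (cF _ _ (dFm g Hg)).
    - intros s Hs. assert (HH := is_derive_minus _ _ s _ _ (D1 s Hs) (dFm g Hg s)).
      replace c with (minus (y1 s) (F1 g s)). exact HH.
      unfold minus, plus, opp; simpl. pose proof (H1 s). lra.
    - auto. }
  assert (Hc : c = 0). { pose proof (H0 1 ltac:(lra)). rewrite Y1, Fm1 in H. lra. }
  intros t Ht. rewrite T_eq by auto. pose proof (H0 t Ht). rewrite Hc in H. fold g. lra.
Qed.

Lemma inf_lemma (P : R -> Prop) : (exists r0, P r0) -> (forall r, P r -> 0 <= r) ->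
  (forall r, P r -> P (phi r)) -> forall eta, 0 < eta -> exists r, P r /\ r < eta.
Proof.
  intros [r0 Hr0] Hpos Hstab eta Heta.
  destruct (Classical_Prop.classic (exists r, P r /\ r < eta)) as [H|H]; auto. exfalso.
  assert (Hge : forall r, P r -> eta <= r).
  { intros r Hr. destruct (Rle_dec eta r); auto. exfalso; apply H; exists r; split; auto; lra. }
  set (E := fun x => P (- x)).
  assert (Hb : bound E). { exists 0. intros x Hx. unfold E in Hx. apply Hpos in Hx. lra. }
  assert (Hne : exists x, E x). { exists (- r0). unfold E. rewrite Ropp_involutive. auto. }
  destruct (completeness E Hb Hne) as [m [Hub Hlub]].
  assert (Hm1 : m <= - eta).
  { apply Hlub. intros x Hx. unfold E in Hx. apply Hge in Hx. lra. }
  set (rs := - m).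
  destruct Hphi as [_ [_ Hmk]]. destruct (Hmk rs ltac:(unfold rs; lra)) as [d [Hd Hd']].
  destruct (Classical_Prop.classic (exists r, P r /\ r < rs + d)) as [[r [Hr Hrd]]|Hn].
  - assert (Hrs : rs <= r). { assert (- r <= m) by (apply Hub; unfold E; rewrite Ropp_involutive; auto). unfold rs; lra. }
    assert (phi r < rs) by (apply Hd'; lra).
    assert (- phi r <= m) by (apply Hub; unfold E; rewrite Ropp_involutive; auto).
    unfold rs in *; lra.
  - assert (m <= - (rs + d)).
    { apply Hlub. intros x Hx. unfold E in Hx. destruct (Rle_dec (rs + d) (- x)). lra.
      exfalso. apply Hn. exists (-x). split; auto; lra. }
    unfold rs in *; lra.
Qed.

Lemma T_ext x y : (forall s, 0 <= s <= 1 -> x s = y s) -> forall t, T x t = T y t.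
Proof. intros H t. unfold T. apply RInt_ext. intros s Hs. rewrite Rmin_left, Rmax_right in Hs by lra. rewrite H; auto; lra. Qed.

Lemma fix_unique x y : cont01 x -> cont01 y -> (forall t, 0 <= t <= 1 -> x t = T x t) ->
  (forall t, 0 <= t <= 1 -> y t = T y t) -> forall t, 0 <= t <= 1 -> y t = x t.
Proof.
  intros Cx Cy Fx Fy.
  set (P := fun r => 0 <= r /\ forall s, 0 <= s <= 1 -> Rabs (x s - y s) <= r).
  assert (Hinf : forall eta, 0 < eta -> exists r, P r /\ r < eta).
  { apply inf_lemma.
    - destruct (bounded01 x Cx) as [M1 HM1]. destruct (bounded01 y Cy) as [M2 HM2].
      exists (Rabs M1 + Rabs M2). split. pose proof (Rabs_pos M1); pose proof (Rabs_pos M2); lra.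
      intros s Hs. specialize (HM1 s Hs). specialize (HM2 s Hs).
      pose proof (Rabs_triang (x s) (- y s)). rewrite Rabs_Ropp in H.
      pose proof (Rle_abs M1). pose proof (Rle_abs M2). unfold Rminus. lra.
    - intros r [Hr _]; auto.
    - intros r [Hr H]. split. apply phi_pos; auto. intros s Hs. rewrite Fx, Fy by auto.
      apply contr; auto. }
  intros t Ht. apply Rminus_diag_uniq_sym. apply Rabs_eq_0.
  apply Rle_antisym; [|apply Rabs_pos]. apply Rle_plus_epsilon. intros e He.
  destruct (Hinf e He) as [r [[_ Hr] Hre]]. specialize (Hr t Ht). lra.
Qed.

Section Iter.
Variable x0 : R -> R.
Hypothesis Cx0 : cont01 x0.
Fixpoint it (n : nat) : R -> R := match n with O => x0 | S n => T (it n) end.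

Lemma it_cont n : cont01 (it n).
Proof. induction n; simpl; auto. apply T_cont; auto. Qed.

Definition Dd (x y : R -> R) r := forall s, 0 <= s <= 1 -> Rabs (x s - y s) <= r.

Lemma Dd_T x y r : cont01 x -> cont01 y -> 0 <= r -> Dd x y r -> Dd (T x) (T y) (phi r).
Proof. intros; intros s Hs; apply contr; auto. Qed.

Lemma step_small : forall eta, 0 < eta -> exists N, forall m, (N <= m)%nat -> Dd (it m) (it (S m)) eta.
Proof.
  intros eta Heta.
  destruct (inf_lemma (fun r => 0 <= r /\ exists n, Dd (it n) (it (S n)) r)) with eta as [r [[Hr0 [N HN]] Hr]]; auto.
  - destruct (bounded01 _ (it_cont 0)) as [M1 HM1]. destruct (bounded01 _ (it_cont 1)) as [M2 HM2].
      exists (Rabs M1 + Rabs M2). split. pose proof (Rabs_pos M1); pose proof (Rabs_pos M2); lra.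
      exists O. intros s Hs. specialize (HM1 s Hs). specialize (HM2 s Hs).
      pose proof (Rabs_triang (it 0 s) (- it 1 s)). rewrite Rabs_Ropp in H.
      pose proof (Rle_abs M1). pose proof (Rle_abs M2). unfold Rminus. lra.
  - intros r [H _]; auto.
  - intros r [Hr [n Hn]]. split. apply phi_pos; auto. exists (S n). exact (Dd_T _ _ _ (it_cont n) (it_cont (S n)) Hr Hn).
  - exists N. intros m Hm. induction Hm as [|m Hm IHm].
    + intros s Hs. specialize (HN s Hs). lra.
    + assert (Dd (it (S m)) (it (S (S m))) (phi eta)) by exact (Dd_T _ _ _ (it_cont m) (it_cont (S m)) (Rlt_le _ _ Heta) IHm).
      pose proof (phi_lt eta Heta). intros s Hs. specialize (H s Hs). lra.
Qed.

Lemma cauchy : forall e, 0 < e -> exists N, forall n m, (N <= n)%nat -> (N <= m)%nat ->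
   Dd (it n) (it m) (3 * e).
Proof.
  intros e He. destruct Hphi as [_ [_ Hmk]]. destruct (Hmk e He) as [d [Hd Hd']].
  set (d' := Rmin d e). assert (Hd'0 : 0 < d') by (apply Rmin_glb_lt; auto).
  assert (d' <= d) by apply Rmin_l. assert (d' <= e) by apply Rmin_r.
  destruct (step_small (d'/2) ltac:(lra)) as [N HN].
  assert (Hk : forall k, Dd (it N) (it (N + k)) (e + d'/2)).
  { induction k.
    - rewrite Nat.add_0_r. intros s Hs. rewrite Rminus_diag, Rabs_R0. lra.
    - rewrite Nat.add_succ_r. assert (Hp : 0 <= e + d'/2) by lra.
      assert (H1 : Dd (it (S N)) (it (S (N + k))) (phi (e + d'/2))) by exact (Dd_T _ _ _ (it_cont N) (it_cont (N+k)) Hp IHk).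
      assert (H2 : phi (e + d'/2) < e) by (apply Hd'; lra).
      intros s Hs. specialize (H1 s Hs). specialize (HN N (le_n _) s Hs).
      pose proof (Rabs_triang (it N s - it (S N) s) (it (S N) s - it (S (N + k)) s)) as Tr.
      replace (it N s - it (S N) s + (it (S N) s - it (S (N + k)) s)) with (it N s - it (S (N+k)) s) in Tr by ring.
      lra. }
  exists N. intros n m Hn Hm s Hs.
  destruct (Nat.le_exists_sub N n Hn) as [a [-> _]]. destruct (Nat.le_exists_sub N m Hm) as [b [-> _]].
  rewrite Nat.add_comm. rewrite (Nat.add_comm b).
  pose proof (Hk a s Hs). pose proof (Hk b s Hs).
  pose proof (Rabs_triang (it (N + a) s - it N s) (it N s - it (N + b) s)) as Tr.
  replace (it (N + a) s - it N s + (it N s - it (N + b) s)) with (it (N + a) s - it (N+b) s) in Tr by ring.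
  rewrite Rabs_minus_sym in H1. lra.
Qed.

Definition xl (t : R) : R := real (Lim_seq (fun n => it n t)).

Lemma unif : forall e, 0 < e -> exists N, forall n, (N <= n)%nat -> Dd (it n) xl (3 * e).
Proof.
  intros e He. destruct (cauchy e He) as [N HN]. exists N. intros n Hn s Hs.
  assert (Hl : is_lim_seq (fun n => it n s) (xl s)).
  { unfold xl. apply Lim_seq_correct'. apply ex_lim_seq_cauchy_corr. intros eps.
    destruct (cauchy (eps/4) ltac:(destruct eps; simpl; lra)) as [M HM]. exists M.
    intros p q Hp Hq. specialize (HM p q Hp Hq s Hs). destruct eps; simpl in *; lra. }
  apply is_lim_seq_spec in Hl.
  apply Rle_plus_epsilon. intros eps Heps. destruct (Hl (mkposreal eps Heps)) as [M HM].
  specialize (HM (max M N) (Nat.le_max_l _ _)). simpl in HM.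
  specialize (HN n (max M N) Hn (Nat.le_max_r _ _) s Hs).
  pose proof (Rabs_triang (it n s - it (max M N) s) (it (max M N) s - xl s)) as Tr.
  replace (it n s - it (max M N) s + (it (max M N) s - xl s)) with (it n s - xl s) in Tr by ring.
  lra.
Qed.

Lemma xl_cont : cont01 xl.
Proof.
  intros t Ht eps He. destruct (unif (eps/12) ltac:(lra)) as [N HN].
  destruct (it_cont N t Ht (eps/4) ltac:(lra)) as [d [Hd H]].
  exists d. split; auto. intros t' Ht' Htt.
  specialize (H t' Ht' Htt). pose proof (HN N (le_n _) t Ht). pose proof (HN N (le_n _) t' Ht').
  pose proof (Rabs_triang (xl t' - it N t') (it N t' - xl t)).
  pose proof (Rabs_triang (it N t' - it N t) (it N t - xl t)).
  replace (xl t' - it N t' + (it N t' - xl t)) with (xl t' - xl t) in H2 by ring.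
  replace (it N t' - it N t + (it N t - xl t)) with (it N t' - xl t) in H3 by ring.
  rewrite Rabs_minus_sym in H1. lra.
Qed.

Lemma xl_fix : forall t, 0 <= t <= 1 -> xl t = T xl t.
Proof.
  intros t Ht. apply Rminus_diag_uniq. apply Rabs_eq_0.
  apply Rle_antisym; [|apply Rabs_pos]. apply Rle_plus_epsilon. intros e He.
  destruct (unif (e/6) ltac:(lra)) as [N HN].
  assert (H1 := Dd_T (it N) xl (3*(e/6)) (it_cont N) xl_cont ltac:(lra) (HN N (le_n _)) t Ht).
  pose proof (phi_lt (3*(e/6)) ltac:(lra)).
  pose proof (HN (S N) (le_S _ _ (le_n _)) t Ht). simpl in H0.
  pose proof (Rabs_triang (xl t - T (it N) t) (T (it N) t - T xl t)).
  replace (xl t - T (it N) t + (T (it N) t - T xl t)) with (xl t - T xl t) in H2 by ring.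
  rewrite Rabs_minus_sym in H0. lra.
Qed.
End Iter.
End Op.

Theorem corollary8 (f : R -> R -> R) :
  cont01xR f ->
  (exists phi : R -> R, in_Phi phi /\
     (forall t a b, 0 <= t <= 1 -> a <= b ->
        0 <= f t b - f t a /\ f t b - f t a <= 9 * sqrt 3 * phi (b - a)) /\
     (exists x0 : R -> R, cont01 x0 /\
        forall t, 0 <= t <= 1 ->
          x0 t <= RInt (fun s => G t s * f s (x0 s)) 0 1)) ->
  exists x, is_solution f x /\
    forall y, is_solution f y -> forall t, 0 <= t <= 1 -> y t = x t.
Proof.
  intros Hf [phi [Hphi [HK [x0 [Cx0 _]]]]].
  exists (xl f x0). split.
  - apply (fix_sol f Hf). apply xl_cont with phi; auto. apply xl_fix with phi; auto.
  - intros y Hy. destruct (sol_fix f Hf y Hy) as [Cy Fy].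
    apply (fix_unique f phi Hf Hphi HK); auto. apply xl_cont with phi; auto. apply xl_fix with phi; auto.
Qed.
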